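(* Let $\sigma:\mathbb{R}\to\mathbb{R}$ be an increasing odd homeomorphism and let $A,S$ be Borel subsets of $\mathbb{R}_{\geq0}^2$ with $E_\sigma^{-1}(A)=A$. Then for every measure $\mu$ on $S$ that is $\{h_\sigma,v_\sigma\}$-invariant on $S$ and gives measure zero to the coordinate axes, the measure $\nu=1_{A\cap S}\,\mu$ is also $\{h_\sigma,v_\sigma\}$-invariant on $S$.
   Context: $h_\sigma(x,y)=(x+\sigma^{-1}(y),y)$, $v_\sigma(x,y)=(x,\sigma(x)+y)$. $E_\sigma:\mathbb{R}_{\geq0}^2\to\mathbb{R}_{\geq0}^2$ is $E_\sigma(x,y)=(x-\sigma^{-1}(y),y)$ if $y<\sigma(x)$ and $(x,y-\sigma(x))$ if $y\geq\sigma(x)$. A measure $\mu$ on the Borel subsets of $S$ is $\{h_\sigma,v_\sigma\}$-invariant on $S$ if for every Borel $B\subset S$ and $g\in\{h_\sigma,v_\sigma\}$ with $gB\subset S$, $\mu(gB)=\mu(B)$. *)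

(* Defs.v *)
From HB Require Import structures.
From mathcomp Require Import all_boot all_order all_algebra.
From mathcomp Require Import all_classical all_reals all_analysis.
Set Implicit Arguments. Unset Strict Implicit. Unset Printing Implicit Defensive.
Import Order.TTheory GRing.Theory Num.Theory numFieldNormedType.Exports.
Local Open Scope classical_set_scope.
Local Open Scope ring_scope.

Section Defs.
Variable R : realType.

Definition quadrant : set (R * R) := [set p | 0 <= p.1 /\ 0 <= p.2].

Definition axes : set (R * R) := [set p | p.1 = 0 \/ p.2 = 0].

(* h_sigma(x,y) = (x + sigma^{-1}(y), y); sigmainv is the inverse of sigma *)
Definition hmap (sigmainv : R -> R) (p : R * R) : R * R :=
  (p.1 + sigmainv p.2, p.2).

Definition vmap (sigma : R -> R) (p : R * R) : R * R :=
  (p.1, sigma p.1 + p.2).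

(* E_sigma on R_{>=0}^2 (the formula, defined on all of R^2) *)
Definition Emap (sigma sigmainv : R -> R) (p : R * R) : R * R :=
  if p.2 < sigma p.1 then (p.1 - sigmainv p.2, p.2)
  else (p.1, p.2 - sigma p.1).

Definition Epreimage (sigma sigmainv : R -> R) (A : set (R * R)) : set (R * R) :=
  [set p | quadrant p /\ A (Emap sigma sigmainv p)].

Definition invariant_on (S : set (R * R)) (g : R * R -> R * R)
  (mu : set (R * R) -> \bar R) : Prop :=
  forall B : set (R * R), measurable B -> B `<=` S -> g @` B `<=` S ->
    mu (g @` B) = mu B.

Definition hv_invariant_on (sigma sigmainv : R -> R) (S : set (R * R))
  (mu : set (R * R) -> \bar R) : Prop :=
  invariant_on S (hmap sigmainv) mu /\ invariant_on S (vmap sigma) mu.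

Definition restrict_measure (A S : set (R * R)) (mu : set (R * R) -> \bar R)
  : set (R * R) -> \bar R := fun B => mu (B `&` (A `&` S)).

End Defs.

(* Main.v *)
Require Import Defs.
From HB Require Import structures.
From mathcomp Require Import all_boot all_order all_algebra.
From mathcomp Require Import all_classical all_reals all_analysis.
Import Order.TTheory GRing.Theory Num.Theory numFieldNormedType.Exports.
Local Open Scope classical_set_scope.
Local Open Scope ring_scope.

Lemma hmap_image_meas (R : realType) (sigma sigmainv : R -> R)
  (sigmainv_cont : continuous sigmainv) (X : set (R * R)) :
  measurable X -> measurable (hmap sigmainv @` X).
Proof.
move=> mX.
pose g := fun p : R * R => (p.1 - sigmainv p.2, p.2).
have -> : hmap sigmainv @` X = g @^-1` X.
  apply/seteqP; split => [_ [p Xp <-]|p Xp].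
    by rewrite /g /hmap /= addrK -surjective_pairing.
  exists (g p) => //; rewrite /g /hmap /= subrK -surjective_pairing //.
have mg : measurable_fun setT g.
  apply: measurable_fun_pair; last exact: measurable_snd.
  apply: measurable_realfun.measurable_funB; first exact: measurable_fst.
  apply: (measurableT_comp (f := sigmainv) (g := snd)).
    exact: measurable_realfun.continuous_measurable_fun.
  exact: measurable_snd.
by rewrite -[_ @^-1` _]setTI; apply: mg.
Qed.

Lemma null_squeeze d (T : measurableType d) (R : realType)
  (mu : {measure set T -> \bar R}) (C X N : set T) :
  measurable C -> measurable X -> measurable N -> mu N = 0%E ->
  C `<=` X -> X `<=` C `|` N -> mu X = mu C.
Proof.
move=> mC mX mN N0 CX XCN; apply/eqP; rewrite eq_le; apply/andP; split.
  apply: (le_trans (le_measure mu _ _ XCN)); rewrite ?inE //.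
    exact: measurableU.
  apply: (le_trans (measureU2 mu mC mN)); apply: geeDl; by move: N0 => /eqP; rewrite -measure_le0.
by apply: le_measure; rewrite ?inE.
Qed.

Theorem lemma10 (R : realType) (sigma sigmainv : R -> R)
  (sigma_cont : continuous sigma) (sigmainv_cont : continuous sigmainv)
  (sigmaK : cancel sigma sigmainv) (sigmainvK : cancel sigmainv sigma)
  (sigma_incr : {homo sigma : x y / x < y})
  (sigma_odd : forall x, sigma (- x) = - sigma x)
  (A S : set (R * R))
  (mA : measurable A) (mS : measurable S)
  (A_sub : A `<=` @quadrant R) (S_sub : S `<=` @quadrant R)
  (hA : Epreimage sigma sigmainv A = A) :
  forall mu : {measure set (R * R) -> \bar R},
    hv_invariant_on sigma sigmainv S mu ->
    mu (@axes R `&` S) = 0%E ->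
    hv_invariant_on sigma sigmainv S (restrict_measure A S mu).
Proof.
move=> mu [Hh Hv] H0.
have hAq : forall q, A q <-> quadrant q /\ A (Emap sigma sigmainv q).
  move=> q; split => [Aq|H].
    by have : Epreimage sigma sigmainv A q by rewrite hA.
  by rewrite -hA.
pose Z := [set p : R * R | p.1 = 0].
have mZ : measurable Z.
  have := (@measurable_fst _ _ R R) measurableT _ (measurable_set1 (0:R)).
  by rewrite setTI.
have mZ2 : measurable [set p : R * R | p.2 = 0].
  have := (@measurable_snd _ _ R R) measurableT _ (measurable_set1 (0:R)).
  by rewrite setTI.
have maxes : measurable (@axes R).
  have -> : @axes R = Z `|` [set p : R * R | p.2 = 0] by [].
  exact: measurableU.
split.
- move=> B mB BS hBS; rewrite /restrict_measure.
  have key : forall p, B p -> ~ Z p ->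
      (A (hmap sigmainv p) <-> A p).
    move=> p Bp Zp.
    have [q1 q2] := S_sub _ (BS _ Bp).
    have qh : quadrant (hmap sigmainv p) by apply: S_sub; apply: hBS; exists p.
    have p1 : 0 < p.1 by rewrite lt_neqAle q1 andbT eq_sym; apply/eqP.
    have E : Emap sigma sigmainv (hmap sigmainv p) = p.
      rewrite /Emap /hmap /=.
      have lt : sigma (sigmainv p.2) < sigma (p.1 + sigmainv p.2).
        by apply: sigma_incr; rewrite ltrDr.
      rewrite sigmainvK in lt.
      by rewrite lt addrK -surjective_pairing.
    rewrite hAq E; tauto.
  pose C := B `&` A `&` ~` Z.
  have mC : measurable C.
    by apply: measurableI; [apply: measurableI|apply: measurableC].
  have mBZ : measurable (B `&` Z) by apply: measurableI.
  have BZ0 : mu (B `&` Z) = 0%E.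
    apply/eqP; rewrite -measure_le0 -H0; apply: le_measure; rewrite ?inE //.
      exact: measurableI.
    by move=> p [Bp Zp]; split; [left|apply: BS].
  have mhB := @hmap_image_meas R sigma sigmainv sigmainv_cont _ mB.
  have mhC := @hmap_image_meas R sigma sigmainv sigmainv_cont _ mC.
  have mhBZ := @hmap_image_meas R sigma sigmainv sigmainv_cont _ mBZ.
  have hBZ0 : mu (hmap sigmainv @` (B `&` Z)) = 0%E.
    rewrite Hh //; first by move=> p [Bp _]; apply: BS.
    by move=> _ [p [Bp _] <-]; apply: hBS; exists p.
  have hC : mu (hmap sigmainv @` C) = mu C.
    apply: Hh => //; first by move=> p [[Bp _] _]; apply: BS.
    by move=> _ [p [[Bp _] _] <-]; apply: hBS; exists p.
  rewrite (@null_squeeze _ _ _ mu (hmap sigmainv @` C) _ (hmap sigmainv @` (B `&` Z))) //.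
  + rewrite hC; apply/esym.
    apply: (@null_squeeze _ _ _ mu C _ (B `&` Z)) => //.
    * by apply: measurableI => //; apply: measurableI.
    * by move=> p [[Bp Ap] Zp]; split => //; split => //; apply: BS.
    * move=> p [Bp [Ap Sp]]; have [Zp|Zp] := pselect (Z p).
        by right.
      by left.
  + by apply: measurableI => //; apply: measurableI.
  + move=> _ [p [[Bp Ap] Zp] <-]; split; first by exists p.
    split; first by rewrite key.
    by apply: hBS; exists p.
  + move=> _ [[p Bp <-] [Ap Sp]]; have [Zp|Zp] := pselect (Z p).
      by right; exists p.
    by left; exists p => //; split => //; split => //; rewrite -key.
- move=> B mB BS vBS; rewrite /restrict_measure.
  have key : forall p, B p -> (A (vmap sigma p) <-> A p).
    move=> p Bp.
    have [q1 q2] := S_sub _ (BS _ Bp).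
    have qv : quadrant (vmap sigma p) by apply: S_sub; apply: vBS; exists p.
    have E : Emap sigma sigmainv (vmap sigma p) = p.
      rewrite /Emap /vmap /= ltNge lerDl q2 /=.
      by rewrite (addrC (sigma p.1)) addrK -surjective_pairing.
    rewrite hAq E; tauto.
  have -> : vmap sigma @` B `&` (A `&` S) = vmap sigma @` (B `&` (A `&` S)).
    apply/seteqP; split.
      move=> _ [[p Bp <-] [Ap Sp]]; exists p => //; split => //; split.
        by rewrite -key.
      exact: BS.
    move=> _ [p [Bp [Ap Sp]] <-]; split; first by exists p.
    split; first by rewrite key.
    by apply: vBS; exists p.
  apply: Hv.
  + by apply: measurableI => //; apply: measurableI.
  + by move=> p [Bp _]; apply: BS.
  + by move=> _ [p [Bp _] <-]; apply: vBS; exists p.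
Qed.
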